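(* Let $k$ be a field and let $\varphi$ be a cubic form on a finite-dimensional vector space $V$ over $k$. If there exists a simple field extension $K/k$ with $[K:k] = 4$ such that $\varphi_K$ is isotropic, then there exists a finite extension $L/k$ with $[L:k] \in \{1,5\}$ such that $\varphi_L$ is isotropic.
   Context: A cubic form is a homogeneous polynomial function of degree $3$. For a field extension $K/k$, $\varphi_K$ denotes the form on $V \otimes_k K$ with $\varphi_K(v \otimes w) = w^3 \varphi(v)$. A form is isotropic if it has a non-zero zero. *)

(* Defs.v *)
From HB Require Import structures.
From mathcomp Require Import all_boot all_order all_algebra all_field.
From mathcomp Require Import mpoly.
Set Implicit Arguments. Unset Strict Implicit. Unset Printing Implicit Defensive.
Import GRing.Theory.
Local Open Scope ring_scope.

(* A cubic form on V = k^n (V finite-dimensional, coordinates fixed):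
   a homogeneous polynomial of degree 3 in n variables. *)
Definition cubic_form (k : fieldType) (n : nat) (phi : {mpoly k[n]}) : Prop :=
  phi \is 3.-homog.

Definition base_change (k : fieldType) (n : nat) (K : fieldExtType k)
  (phi : {mpoly k[n]}) : {mpoly K[n]} := map_mpoly (in_alg K) phi.

Definition isotropic (R : fieldType) (n : nat) (p : {mpoly R[n]}) : Prop :=
  exists v : 'I_n -> R, (exists i, v i != 0) /\ p.@[v] = 0.

Definition simple_ext (k : fieldType) (K : fieldExtType k) : Prop :=
  exists x : K, (<<1; x>>%VS = fullv).

(* [K:k] is \dim {:K}, the dimension of K as a k-vector space. *)

(* Main.v *)
Require Import Defs.
From HB Require Import structures.
From mathcomp Require Import all_boot all_order all_algebra all_field.
From mathcomp Require Import mpoly.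
From mathcomp Require Import zify.
From Stdlib Require Import Classical.
Set Implicit Arguments. Unset Strict Implicit. Unset Printing Implicit Defensive.
Import GRing.Theory.
Local Open Scope ring_scope.

Lemma meval_rmorph (R S : comNzRingType) (f : {rmorphism R -> S}) n
  (p : {mpoly R[n]}) (v : 'I_n -> R) :
  f p.@[v] = (map_mpoly f p).@[fun i => f (v i)].
Proof.
elim/mpolyind: p => [|c m p _ _ IH]; first by rewrite !(raddf0, meval0, rmorph0).
rewrite mevalD rmorphD IH raddfD /= mevalD map_mpolyZ map_mpolyX.
rewrite !mevalZ !mevalX rmorphM rmorph_prod; congr (_ * _ + _).
by apply: eq_bigr => i _; rewrite rmorphXn.
Qed.

Lemma meval_homog_scale (R : comNzRingType) n d (p : {mpoly R[n]}) c v :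
  p \is d.-homog -> p.@[fun i => c * v i] = c ^+ d * p.@[v].
Proof.
move=> /dhomogP hp; rewrite !mevalE mulr_sumr; apply: eq_big_seq => m /hp <-.
rewrite mulrCA; congr (_ * _).
rewrite (_ : c ^+ _ = c ^+ (\sum_i m i)%N); last by rewrite -mdegE.
rewrite -prodrXr -big_split /=; apply: eq_bigr => i _.
by rewrite exprMn.
Qed.

Lemma coefM_top (R : comNzRingType) (A B : {poly R}) a b :
  (size A <= a.+1)%N -> (size B <= b.+1)%N ->
  (size (A * B)%R <= (a + b).+1)%N /\ (A * B)`_(a + b) = A`_a * B`_b.
Proof.
move=> sA sB; split.
  apply: leq_trans (size_polyMleq A B) _; lia.
have ha : (a < (a + b).+1)%N by rewrite ltnS leq_addr.
rewrite coefM (bigD1 (Ordinal ha)) //= addKn big1 ?addr0 // => [[j hj]] /= hne.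
case: (ltngtP j a) => [ltja|ltaj|eja].
- rewrite [B`__]nth_default ?mulr0 //; apply: leq_trans sB _.
  lia.
- by rewrite nth_default ?mul0r //; apply: leq_trans sA _.
- by move: hne; rewrite -val_eqE /= eja eqxx.
Qed.

Lemma coefX_top (R : comNzRingType) (A : {poly R}) D k :
  (size A <= D.+1)%N ->
  (size (A ^+ k) <= (k * D).+1)%N /\ (A ^+ k)`_(k * D) = A`_D ^+ k.
Proof.
move=> sA; elim: k => [|k [IH1 IH2]].
  by rewrite !expr0 mul0n size_poly1 coefC.
have [h1 h2] := coefM_top sA IH1.
by rewrite exprS mulSn; split => //; rewrite h2 IH2 exprS.
Qed.

Lemma coefprod_top (R : comNzRingType) (I : Type) (r : seq I)
  (G : I -> {poly R}) (g : I -> nat) :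
  (forall i, size (G i) <= (g i).+1)%N ->
  (size (\prod_(i <- r) G i)%R <= (\sum_(i <- r) g i).+1)%N /\
  (\prod_(i <- r) G i)`_(\sum_(i <- r) g i) = \prod_(i <- r) (G i)`_(g i).
Proof.
move=> sG; elim: r => [|i r [IH1 IH2]].
  by rewrite !big_nil size_poly1 coefC.
have [h1 h2] := coefM_top (sG i) IH1.
by rewrite !big_cons; split => //; rewrite h2 IH2.
Qed.

Lemma lead_meval (R : comNzRingType) n d (p : {mpoly R[n]})
  (v : 'I_n -> {poly R}) D :
  p \is d.-homog -> (forall i, size (v i) <= D.+1)%N ->
  (size ((map_mpoly polyC p).@[v]) <= (d * D).+1)%N /\
  ((map_mpoly polyC p).@[v])`_(d * D) = p.@[fun i => (v i)`_D].
Proof.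
move=> /dhomogP hp sv.
rewrite mevalE (perm_big _ (msupp_map_mpoly _ (@polyC_inj R))) mevalE.
have key m : m \in msupp p ->
  (size ((map_mpoly polyC p)@_m * \prod_i v i ^+ m i)%R <= (d * D).+1)%N /\
  ((map_mpoly polyC p)@_m * \prod_i v i ^+ m i)`_(d * D) =
     p@_m * \prod_i (v i)`_D ^+ m i.
  move=> /hp hm; rewrite mcoeff_map_mpoly.
  have := @coefprod_top R _ (index_enum 'I_n) (fun i => v i ^+ m i)
     (fun i => (m i * D)%N) (fun i => (coefX_top (m i) (sv i)).1).
  rewrite -big_distrl /= (_ : (\sum_i m i)%N = d); last by rewrite -hm; rewrite -mdegE.
  move=> [h1 h2]; split.
    by rewrite mul_polyC; apply: leq_trans (size_scale_leq _ _) _ ; rewrite h1.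
  rewrite coefCM h2; congr (_ * _); apply: eq_bigr => i _.
  exact: (coefX_top (m i) (sv i)).2.
split.
  rewrite big_seq; elim/big_rec: _ => [|m q hm IH]; first by rewrite size_poly0.
  apply: leq_trans (size_polyD _ _) _; rewrite geq_max IH andbT.
  exact: (key m hm).1.
rewrite coef_sum; apply: eq_big_seq => m hm; exact: (key m hm).2.
Qed.

Definition phiP (k : fieldType) n (phi : {mpoly k[n]}) (Q : 'I_n -> {poly k}) :
  {poly k} := (map_mpoly polyC phi).@[Q].

Definition TheGoal (k : fieldType) n (phi : {mpoly k[n]}) :=
  exists L : fieldExtType k,
    (\dim (fullv : {vspace L}) = 1%N \/ \dim (fullv : {vspace L}) = 5%N) /\
    isotropic (base_change L phi).

Lemma in_qpoly_eq0 (k : fieldType) (h : {poly k}) (hI : monic_irreducible_poly h) p :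
  (in_qpoly h p == 0) = (h %| p).
Proof.
rewrite Pdiv.Field.dvdpE /Pdiv.CommonRing.rdvdp -(inj_eq val_inj) /= mk_monicE //.
Qed.

Lemma meval_compose (k : fieldType) (S : fieldExtType k) n (phi : {mpoly k[n]})
  (f : {poly k} -> S) (fD : forall x y, f (x + y) = f x + f y)
  (fM : forall x y, f (x * y) = f x * f y) (f1 : f 1 = 1)
  (fC : forall c, f c%:P = in_alg S c) (Q : 'I_n -> {poly k}) :
  f ((map_mpoly polyC phi).@[Q]) = (map_mpoly (in_alg S) phi).@[fun i => f (Q i)].
Proof.
have f0 : f 0 = 0 by apply: (addrI (f 0)); rewrite -fD !addr0.
have fX x m : f (x ^+ m) = f x ^+ m.
  by elim: m => [|m IH]; rewrite ?expr0 ?f1 // !exprS fM IH.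
elim/mpolyind: phi => [|c m p _ _ IH]; first by rewrite !(raddf0, meval0, f0).
rewrite !raddfD /= fD IH !map_mpolyZ !map_mpolyX !mevalZ !mevalX fM fC.
congr (_ * _ + _).
rewrite (big_morph f fM f1); apply: eq_bigr => i _; exact: fX.
Qed.

Lemma Lfield (k : fieldType) n (phi : {mpoly k[n]}) (h : {poly k})
  (hI : monic_irreducible_poly h) :
  (size h = 2%N \/ size h = 6%N) -> forall Q : 'I_n -> {poly k},
  (exists i, ~~ (h %| Q i)) -> h %| phiP phi Q -> TheGoal phi.
Proof.
move=> sh Q [i hi] hd.
exists ({poly %/ h with hI} : fieldExtType k); split.
  rewrite /qfpoly /qpoly dim_polyn mk_monicE //. case: sh => ->; [left|right]; reflexivity.
exists (fun j => (in_qpoly h (Q j) : {poly %/ h with hI})); split.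
  exists i. have e := in_qpoly_eq0 hI (Q i). rewrite -e in hi. exact: hi.
rewrite /base_change.
have E := @meval_compose k ({poly %/ h with hI} : fieldExtType k) n phi (fun p => in_qpoly h p).
rewrite -E.
- have := in_qpoly_eq0 hI (phiP phi Q); rewrite hd => /eqP; exact.
- move=> x y; exact: in_qpolyD.
- move=> x y; exact: in_qpolyM.
- exact: in_qpoly1.
- move=> c; rewrite -alg_polyC; exact: (etrans (in_qpolyZ h c 1) (congr1 _ (in_qpoly1 h))).
Qed.

Definition gl (k : fieldType) n (R : 'I_n -> {poly k}) (s : seq 'I_n) : {poly k} :=
  foldr (fun i acc => gcdp (R i) acc) 0 s.

Lemma gl_dvd (k : fieldType) n (R : 'I_n -> {poly k}) s j :
  j \in s -> gl R s %| R j.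
Proof.
elim: s => [//|i s IH]; rewrite inE => /orP[/eqP -> | js] /=.
  exact: dvdp_gcdl.
exact: dvdp_trans (dvdp_gcdr _ _) (IH js).
Qed.

Lemma dvd_gl (k : fieldType) n (R : 'I_n -> {poly k}) s d :
  (forall j, j \in s -> d %| R j) -> d %| gl R s.
Proof.
elim: s => [|i s IH] H /=; first exact: dvdp0.
rewrite dvdp_gcd H ?mem_head //=. apply: IH => j js; apply: H; by rewrite inE js orbT.
Qed.

Lemma map_mpoly_polyC_homog (k : fieldType) n d (phi : {mpoly k[n]}) :
  phi \is d.-homog -> map_mpoly polyC phi \is d.-homog.
Proof.
move=> /dhomogP hp; apply/dhomogP => m.
rewrite (perm_mem (msupp_map_mpoly _ (@polyC_inj k))); exact: hp.
Qed.

Lemma reduce (k : fieldType) n (phi : {mpoly k[n]}) (R : 'I_n -> {poly k}) :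
  phi \is 3.-homog -> (exists i, R i != 0) ->
  exists (c : {poly k}) (Q : 'I_n -> {poly k}), [/\ c != 0, forall i, c %| R i, forall i, (size (Q i) <= size (R i))%N,
    phiP phi R = c ^+ 3 * phiP phi Q &
    forall h : {poly k}, (1 < size h)%N -> exists i, ~~ (h %| Q i)].
Proof.
move=> hom [i0 hi0].
set c := gl R (enum 'I_n).
have cR i : c %| R i by apply: gl_dvd; rewrite mem_enum.
have c0 : c != 0.
  apply/eqP => c0; move: (cR i0); rewrite c0 dvd0p => /eqP R0; by rewrite R0 eqxx in hi0.
exists c, (fun i => R i %/ c); split => //.
- by move=> i; apply: leq_divp.
- rewrite /phiP -meval_homog_scale; last exact: map_mpoly_polyC_homog.
  by apply: meval_eq => i; rewrite mulrC divpK.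
- move=> h sh; apply/existsP; apply: contraT; rewrite negb_exists => /forallP H.
  have: h * c %| c.
    apply: dvd_gl => j _; rewrite -(divpK (cR j)) dvdp_mul2r //.
    by have := H j; rewrite negbK.
  have h0 : h != 0 by rewrite -size_poly_gt0; apply: leq_trans sh.
  move/(dvdp_leq c0); rewrite size_mul // => hle.
  have : (0 < size c)%N by rewrite size_poly_gt0.
  move=> hc; have : (size c < (size h + size c).-1)%N by rewrite -subn1 ltn_subRL ltn_add2r.
  by rewrite ltnNge hle.
Qed.
Lemma monic_irr_of (k : fieldType) (p : {poly k}) : irreducible_poly p ->
  exists h : {poly k}, [/\ monic_irreducible_poly h, size h = size p & h %| p].
Proof.
move=> [sp ip].
have p0 : p != 0 by rewrite -size_poly_gt0; apply: leq_trans sp.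
have l0 : lead_coef p != 0 by rewrite lead_coef_eq0.
have li0 : (lead_coef p)^-1 != 0 by rewrite invr_eq0.
exists ((lead_coef p)^-1 *: p); split.
- split; last by rewrite monicE lead_coefZ mulVf.
  split; first by rewrite size_scale.
  move=> q sq; rewrite dvdpZr // => /(ip q sq) e.
  apply: eqp_trans e _; rewrite eqp_sym; exact: eqp_scale.
- by rewrite size_scale.
- by rewrite dvdpZl.
Qed.

Lemma irr_size2 (k : fieldType) (p : {poly k}) : size p = 2%N -> irreducible_poly p.
Proof.
move=> sp; split; first by rewrite sp.
move=> q sq qp.
have p0 : p != 0 by rewrite -size_poly_gt0 sp.
have := dvdp_leq p0 qp; rewrite -(dvdp_size_eqp qp) sp.
have q0 : q != 0 by apply/eqP => q0; move: qp; rewrite q0 dvd0p => /eqP p00; rewrite p00 eqxx in p0.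
move: sq; rewrite -size_poly_gt0 in q0; move: q0.
case: (size q) => [|[|[|m]]] //.
Qed.

Lemma not_irr (k : fieldType) (p : {poly k}) : (1 < size p)%N -> ~ irreducible_poly p ->
  exists d : {poly k}, [/\ (1 < size d)%N, (size d < size p)%N & d %| p].
Proof.
move=> sp nip.
have p0 : p != 0 by rewrite -size_poly_gt0; apply: leq_trans sp.
have [q [sq [qp nq]]] : exists q : {poly k}, size q != 1%N /\ q %| p /\ ~~ (q %= p).
  apply: NNPP => H; apply: nip; split => // q sq qp.
  apply: contraT => nq; exfalso; apply: H; by exists q.
have q0 : q != 0 by apply/eqP => q0; move: qp; rewrite q0 dvd0p => /eqP p00; rewrite p00 eqxx in p0.
exists q; split => //.
- move: sq; rewrite -size_poly_gt0 in q0; move: q0.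
  by case: (size q) => [|[|m]].
- rewrite ltn_neqAle (dvdp_leq p0 qp) andbT (dvdp_size_eqp qp); exact: nq.
Qed.

Lemma factor23 (k : fieldType) (g : {poly k}) : (size g = 2 \/ size g = 3)%N ->
  exists h : {poly k}, [/\ monic_irreducible_poly h, (size h = 2 \/ size h = 3)%N & h %| g].
Proof.
move=> sg.
have [ig|nig] := classic (irreducible_poly g).
  have [h [hI sh hg]] := monic_irr_of ig; exists h; split => //; by rewrite sh.
have sg1 : (1 < size g)%N by case: sg => ->.
have [d [sd1 sd2 dg]] := not_irr sg1 nig.
have sd : size d = 2%N by case: sg sd2 sd1 => ->; case: (size d) => [|[|[|m]]].
have [h [hI sh hd]] := monic_irr_of (irr_size2 sd).
exists h; split => //; first by left; rewrite sh.
exact: dvdp_trans hd dg.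
Qed.

Lemma factor (k : fieldType) (g : {poly k}) :
  (size g = 2 \/ size g = 3 \/ size g = 6)%N ->
  exists h : {poly k}, [/\ monic_irreducible_poly h, (size h = 2 \/ size h = 3 \/ size h = 6)%N & h %| g].
Proof.
move=> [s2|[s3|s6]].
- have [h [hI sh hg]] := factor23 (or_introl s2); exists h; split => //; case: sh; auto.
- have [h [hI sh hg]] := factor23 (or_intror s3); exists h; split => //; case: sh; auto.
have [ig|nig] := classic (irreducible_poly g).
  have [h [hI sh hg]] := monic_irr_of ig; exists h; split => //; by rewrite sh s6; auto.
have sg1 : (1 < size g)%N by rewrite s6.
have [d [sd1 sd2 dg]] := not_irr sg1 nig.
have g0 : g != 0 by rewrite -size_poly_gt0 s6.
have [sd|sd] := leqP (size d) 3.
  have sd23 : (size d = 2 \/ size d = 3)%N.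
    by move: sd1 sd; case: (size d) => [|[|[|[|?]]]]; auto.
  have [h [hI sh hd]] := factor23 sd23.
  exists h; split => //; first by case: sh; auto.
  exact: dvdp_trans hd dg.
set e := g %/ d.
have ge : g = e * d by rewrite divpK.
have e0 : e != 0 by apply: contraNneq g0 => e0; rewrite ge e0 mul0r.
have d0 : d != 0 by rewrite -size_poly_gt0; apply: leq_trans sd1.
have se : (size e = 2 \/ size e = 3)%N.
  have := size_mul e0 d0; rewrite -ge s6.
  move: sd sd2; rewrite s6; clearbody e; move: (size d) (size e) => a b.
  move=> h1 h2 h3; rewrite -subn1 in h3; lia.
have [h [hI sh he]] := factor23 se.
exists h; split => //; first by case: sh; auto.
apply: dvdp_trans he _; rewrite ge; exact: dvdp_mulr.
Qed.

Definition QuadH (k : fieldType) n (phi : {mpoly k[n]}) :=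
  forall (h : {poly k}) (Q : 'I_n -> {poly k}), monic_irreducible_poly h ->
  size h = 3%N -> (exists i, ~~ (h %| Q i)) -> h %| phiP phi Q -> TheGoal phi.

Lemma coef_zero_size (k : fieldType) (p : {poly k}) D :
  (size p <= D.+1)%N -> p`_D = 0 -> (size p <= D)%N.
Proof.
move=> s z; rewrite leqNgt; apply/negP => lt.
have e : size p = D.+1 by apply/eqP; rewrite eqn_leq s lt.
have : lead_coef p = 0 by rewrite lead_coefE e.
by move/eqP; rewrite lead_coef_eq0 => /eqP p0; rewrite p0 size_poly0 in e.
Qed.

Lemma coef_size (k : fieldType) (p : {poly k}) i : p`_i != 0 -> (i < size p)%N.
Proof. by apply: contraR; rewrite -leqNgt => /(nth_default 0) ->. Qed.

Lemma X_monic_irr (k : fieldType) : monic_irreducible_poly ('X : {poly k}).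
Proof.
split; last exact: monicX.
have e : ('X - 0%:P : {poly k}) = 'X by rewrite polyC0 oppr0 addr0.
rewrite -e; exact: irredp_XsubC.
Qed.

Lemma X_dvdC (k : fieldType) (c : k) : ('X %| c%:P) = (c == 0).
Proof.
have -> : ('X : {poly k}) = 'X - 0%:P by rewrite polyC0 oppr0 addr0.
by rewrite dvdp_XsubCl rootC.
Qed.

Lemma caseB (k : fieldType) n (phi : {mpoly k[n]}) (hom : phi \is 3.-homog)
  (m : {poly k}) s (sm : size m = s.+1) (ok : nat -> Prop)
  (okP : forall j, ok j -> (j = 2 \/ j = 3 \/ j = 6)%N)
  (ok3 : forall j, ok j -> (2 < j)%N -> QuadH phi) D (Q : 'I_n -> {poly k}) :
  (s <= 3 * D -> ok (3 * D - s).+1)%N ->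
  (forall i, size (Q i) <= D.+1)%N ->
  (forall h : {poly k}, (1 < size h)%N -> exists i, ~~ (h %| Q i)) ->
  m %| phiP phi Q -> (exists i, (Q i)`_D != 0) -> TheGoal phi.
Proof.
move=> hok hs hprim hm [i0 hi0].
set q := fun i => (Q i)`_D.
have [z|nz] := eqVneq phi.@[q] 0.
  apply: (@Lfield k n phi 'X (X_monic_irr k) (or_introl (size_polyX k))
            (fun i => (q i)%:P)).
    by exists i0; rewrite X_dvdC.
  rewrite /phiP -(meval_rmorph (polyC : {rmorphism k -> {poly k}})) z rmorph0.
  exact: dvdp0.
have [h1 h2] := lead_meval hom hs.
rewrite -/(phiP phi Q) in h1 h2.
set P := phiP phi Q in h1 h2 hm.
have sP : size P = (3 * D).+1.
  apply/eqP; rewrite eqn_leq h1 /=; apply: coef_size; rewrite h2; exact: nz.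
have P0 : P != 0 by rewrite -size_poly_gt0 sP.
set g := P %/ m.
have Pg : P = g * m by rewrite divpK.
have g0 : g != 0 by apply: contraNneq P0 => g0; rewrite Pg g0 mul0r.
have m0 : m != 0 by rewrite -size_poly_gt0 sm.
have sg : (size g + s = (3 * D).+1)%N.
  have := size_mul g0 m0; rewrite -Pg sP sm => ->.
  have : (0 < size g)%N by rewrite size_poly_gt0.
  clearbody g; move: (size g) => a; lia.
have hsD : (s <= 3 * D)%N.
  have : (0 < size g)%N by rewrite size_poly_gt0.
  clearbody g; move: (size g) sg => a; lia.
have okg : ok (size g).
  have -> : size g = (3 * D - s).+1 by clearbody g; move: (size g) sg => a; lia.
  exact: hok.
have [h [hI sh hg]] := factor (okP _ okg).
have hP : h %| P by rewrite Pg; exact: dvdp_mulr.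
have [i hi] := hprim h (ltac:(case: sh => [->|[->|->]] //)).
case: sh => [sh|[sh|sh]].
- exact: (Lfield hI (or_introl sh) (ex_intro _ i hi) hP).
- apply: (@ok3 (size g) okg _ h Q hI sh (ex_intro _ i hi) hP).
  have := dvdp_leq g0 hg; rewrite sh.
  by have := okP _ okg; case=> [->|[->|->]].
- exact: (Lfield hI (or_intror sh) (ex_intro _ i hi) hP).
Qed.

Lemma core (k : fieldType) n (phi : {mpoly k[n]}) (hom : phi \is 3.-homog)
  (m : {poly k}) s (sm : size m = s.+1) (ok : nat -> Prop)
  (okP : forall j, ok j -> (j = 2 \/ j = 3 \/ j = 6)%N)
  (ok3 : forall j, ok j -> (2 < j)%N -> QuadH phi) D (Q : 'I_n -> {poly k}) :
  (forall D', D' <= D -> s <= 3 * D' -> ok (3 * D' - s).+1)%N ->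
  (forall i, size (Q i) <= D.+1)%N ->
  (forall h : {poly k}, (1 < size h)%N -> exists i, ~~ (h %| Q i)) ->
  m %| phiP phi Q -> TheGoal phi.
Proof.
elim: D Q => [|D IH] Q hok hs hprim hm.
  have [[i hi]|nex] := classic (exists i, (Q i)`_0 != 0).
    exact: (caseB hom sm okP ok3 (hok 0%N (leqnn 0)) hs hprim hm (ex_intro _ i hi)).
  have [i hi] := hprim 'X (ltac:(by rewrite size_polyX)).
  exfalso; apply: nex; exists i; apply: contraNneq hi => z.
  have : (size (Q i) <= 0)%N by apply: coef_zero_size.
  by rewrite leqn0 size_poly_eq0 => /eqP ->; exact: dvdp0.
have [[i hi]|nex] := classic (exists i, (Q i)`_D.+1 != 0).
  exact: (caseB hom sm okP ok3 (hok D.+1 (leqnn _)) hs hprim hm (ex_intro _ i hi)).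
apply: (IH Q) => //.
  by move=> D' hD'; apply: hok; apply: leq_trans hD' _.
move=> i; apply: coef_zero_size => //; apply/eqP; apply: contraT => nz.
by exfalso; apply: nex; exists i.
Qed.

Lemma in_qpoly_mod (k : fieldType) (h : {poly k}) (hI : monic_irreducible_poly h) p :
  in_qpoly h (p %% h) = in_qpoly h p.
Proof.
apply/eqP; rewrite -subr_eq0 -raddfB /=; rewrite in_qpoly_eq0 //.
have -> : p %% h - p = - (p %/ h * h) by rewrite {2}(divp_eq p h) opprD addrCA subrr addr0.
by rewrite dvdpNr dvdp_mull.
Qed.

Lemma quad (k : fieldType) n (phi : {mpoly k[n]}) (hom : phi \is 3.-homog) :
  QuadH phi.
Proof.
move=> h Q hI sh [i0 hi0] hP.
have h0 : h != 0 by rewrite -size_poly_gt0 sh.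
set R := fun i => Q i %% h.
have sR i : (size (R i) <= 2)%N by have := ltn_modp (Q i) h; rewrite h0 sh.
have R0 : R i0 != 0.
  apply: contraNneq hi0 => R0; rewrite (dvdp_mod _ (dvdpp h)).
  by rewrite -/(R i0) R0 dvdp0.
have hR : h %| phiP phi R.
  have E := @meval_compose k ({poly %/ h with hI} : fieldExtType k) n phi
               (fun p => in_qpoly h p).
  have fD : forall x y, in_qpoly h (x + y) = (in_qpoly h x + in_qpoly h y : {poly %/ h with hI}).
    move=> x y; exact: in_qpolyD.
  have fM : forall x y, in_qpoly h (x * y) = (in_qpoly h x * in_qpoly h y : {poly %/ h with hI}).
    move=> x y; exact: in_qpolyM.
  have f1 : (in_qpoly h 1 : {poly %/ h with hI}) = 1 by exact: in_qpoly1.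
  have fC : forall c, (in_qpoly h c%:P : {poly %/ h with hI}) = in_alg _ c.
    move=> c; rewrite -alg_polyC; exact: (etrans (in_qpolyZ h c 1) (congr1 _ (in_qpoly1 h))).
  have e1 := E fD fM f1 fC R.
  have e2 := E fD fM f1 fC Q.
  have e3 : (map_mpoly (in_alg ({poly %/ h with hI} : fieldExtType k)) phi).@[fun i => (in_qpoly h (R i) : {poly %/ h with hI})] =
     (map_mpoly (in_alg ({poly %/ h with hI} : fieldExtType k)) phi).@[fun i => (in_qpoly h (Q i) : {poly %/ h with hI})].
    by apply: meval_eq => i; exact: in_qpoly_mod.
  rewrite e3 -e2 in e1.
  rewrite -(in_qpoly_eq0 hI); apply/eqP; apply: (etrans e1).
  have := in_qpoly_eq0 hI (phiP phi Q); rewrite hP => /eqP; exact.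
have [c [Q' [c0 cR sQ' ePh prim]]] := reduce hom (ex_intro _ i0 R0).
have nhc : ~~ (h %| c).
  apply/negP => hc; have := dvdp_leq R0 (dvdp_trans hc (cR i0)).
  by rewrite sh; have := sR i0; move: (size (R i0)) => a; lia.
have cop : coprimep h (c ^+ 3) by apply: coprimep_expr; rewrite irreducible_poly_coprime //; case: hI.
have hQ' : h %| phiP phi Q' by rewrite -(Gauss_dvdpr _ cop) -ePh.
apply: (@core k n phi hom h 2 sh (fun j => j = 2%N) _ _ 1 Q') => //.
- by move=> j ->; left.
- by move=> j ->.
- move=> D' hD' h2; have -> : D' = 1%N by move: hD' h2; case: D' => [|[|?]].
  by [].
- by move=> i; apply: leq_trans (sQ' i) (sR i).
Qed.

Theorem theorem3p8 (k : fieldType) (n : nat) (phi : {mpoly k[n]}) :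
  cubic_form phi ->
  (exists K : fieldExtType k,
      simple_ext K /\ \dim (fullv : {vspace K}) = 4%N /\ isotropic (base_change K phi)) ->
  exists L : fieldExtType k,
    (\dim (fullv : {vspace L}) = 1%N \/ \dim (fullv : {vspace L}) = 5%N) /\
    isotropic (base_change L phi).
Proof.
move=> hom [K [[x hx] [dK [v [[i0 vi0] hv]]]]].
pose U : {subfield K} := 1%AS.
have hx' : <<U; x>>%VS = fullv by exact: hx.
have adeg : adjoin_degree U x = 4%N.
  by have := dim_Fadjoin U x; rewrite hx' dK /U dimv1 muln1.
pose f (p : {poly k}) : K := (map_poly (in_alg K) p).[x].
have fD : forall a b, f (a + b) = f a + f b by move=> a b; rewrite /f rmorphD hornerD.
have fM : forall a b, f (a * b) = f a * f b by move=> a b; rewrite /f rmorphM hornerM.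
have f1 : f 1 = 1 by rewrite /f rmorph1 hornerC.
have fC : forall c, f c%:P = in_alg K c by move=> c; rewrite /f map_polyC hornerC.
have Pex : forall i, exists p : {poly k}, (size p <= 4)%N && (f p == v i).
  move=> i.
  have vin : v i \in <<U; x>>%VS by rewrite hx' memvf.
  have /polyOver1P [q eq] := Fadjoin_polyOver U x (v i).
  exists q; apply/andP; split.
    by rewrite -(size_map_poly (in_alg K)) -eq -adeg size_Fadjoin_poly.
  by rewrite /f -eq Fadjoin_poly_eq.
pose P i := xchoose (Pex i).
have sP i : (size (P i) <= 4)%N by have /andP[] := xchooseP (Pex i).
have fP i : f (P i) = v i by have /andP[_ /eqP] := xchooseP (Pex i).
have fphi : f (phiP phi P) = 0.
  rewrite /phiP (meval_compose phi fD fM f1 fC) -hv /base_change.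
  by apply: meval_eq => i; rewrite fP.
have /polyOver1P [mk emk] := minPolyOver U x.
have smk : size mk = 5%N.
  by rewrite -(size_map_poly (in_alg K)) -emk size_minPoly adeg.
have mkdvd : forall p, f p = 0 -> mk %| p.
  move=> p fp; rewrite -(dvdp_map (in_alg K)) -emk; apply: minPoly_dvdp.
    by apply/polyOver1P; exists p.
  by apply/rootP.
have P0 : P i0 != 0.
  by apply: contraNneq vi0 => P0; rewrite -fP P0 /f rmorph0 horner0.
have [c [Q [c0 cR sQ ePh prim]]] := reduce hom (ex_intro _ i0 P0).
have fc : f c != 0.
  apply/negP => /eqP fc; have := dvdp_leq c0 (mkdvd c fc).
  have := dvdp_leq P0 (cR i0); have := sP i0; rewrite smk.
  move: (size c) (size (P i0)) => a b; lia.
have fQ : f (phiP phi Q) = 0.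
  move: fphi; rewrite ePh fM.
  have fX : f (c ^+ 3) = f c ^+ 3 by rewrite !exprS expr0 !fM f1.
  rewrite fX => /eqP; rewrite mulf_eq0 expf_eq0 /= (negbTE fc) /= => /eqP; exact.
apply: (@core k n phi hom mk 4 smk (fun j => j = 3%N \/ j = 6%N) _ _ 3 Q).
- by move=> j [->|->]; auto.
- by move=> j _ _; exact: quad.
- move=> D' hD' h4; move: hD' h4; case: D' => [|[|[|[|?]]]] // _ _; auto.
- by move=> i; apply: leq_trans (sQ i) (sP i).
- exact: prim.
- exact: mkdvd.
Qed.
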